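(* Let $p,s,t$ be parameters with $p\neq0$, and let $a_n=a_n(p,s,t)$ be defined by $a_0=1$, $a_1=p$ and $a_n=s\,a_{n-1}+t\sum_{k=0}^{n-3}a_{k+1}a_{n-k-2}$ for $n\ge2$. Then the sequence $\left(\frac1p a_{n+1}\right)_{n\ge0}$ has generating function $\mathcal{J}(s,s,s,\ldots;pt,pt,pt,\ldots)$, and its Hankel transform is $\left((pt)^{\binom{n+1}{2}}\right)_{n\ge0}$.
   Context: $\mathcal{J}(\alpha_0,\alpha_1,\ldots;\beta_1,\beta_2,\ldots)$ denotes the power series given by the continued fraction $\cfrac{1}{1-\alpha_0x-\cfrac{\beta_1x^2}{1-\alpha_1x-\cfrac{\beta_2x^2}{1-\alpha_2x-\cdots}}}$. The Hankel transform of a sequence $(b_n)_{n\ge0}$ is the sequence $h_n=\det(b_{i+j})_{0\le i,j\le n}$, $n\ge0$. *)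

(* Defs.v *)
From mathcomp Require Import all_boot all_algebra.
Set Implicit Arguments. Unset Strict Implicit. Unset Printing Implicit Defensive.
Import GRing.Theory.
Local Open Scope ring_scope.

Definition fps (R : nzRingType) := nat -> R.

Definition smul (R : nzRingType) (f g : fps R) : fps R :=
  fun n => \sum_(i < n.+1) f i * g (n - i)%N.

Definition spow (R : nzRingType) (h : fps R) (k : nat) : fps R :=
  iter k (smul h) (fun n => (n == 0%N)%:R).

(* Inverse 1/(1 - h) of 1 - h, for a series h with h 0 = 0:
   sum_k h^k (only k <= n contributes to the n-th coefficient). *)
Definition sinv1m (R : nzRingType) (h : fps R) : fps R :=
  fun n => \sum_(k < n.+1) spow h k n.

(* Truncated J-fraction of depth k starting at level i:
   Jtrunc 0 i = 0,
   Jtrunc (k+1) i = 1 / (1 - alpha_i x - beta_{i+1} x^2 * Jtrunc k (i+1)). *)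
Fixpoint Jtrunc (R : nzRingType) (alpha beta : nat -> R) (k i : nat) : fps R :=
  match k with
  | 0 => fun _ => 0
  | k'.+1 =>
      sinv1m (fun n => alpha i * (n == 1%N)%:R
                     + (if (2 <= n)%N then beta i.+1 * Jtrunc alpha beta k' i.+1 (n - 2)%N
                        else 0))
  end.

(* The J-fraction J(alpha_0, alpha_1, ...; beta_1, beta_2, ...) as a formal
   power series: its n-th coefficient is that of any convergent of depth > n/2;
   we take depth n+1. *)
Definition Jfrac (R : nzRingType) (alpha beta : nat -> R) : fps R :=
  fun n => Jtrunc alpha beta n.+1 0 n.

Definition hankel (R : comNzRingType) (b : nat -> R) (n : nat) : R :=
  \det (\matrix_(i < n.+1, j < n.+1) b (i + j)%N).

(* Main.v *)
Require Import Defs.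
From mathcomp Require Import all_boot all_algebra zify ring.
Set Implicit Arguments. Unset Strict Implicit. Unset Printing Implicit Defensive.
Import GRing.Theory.
Local Open Scope ring_scope.
Section Gen.
Variable R : comNzRingType.
Implicit Types f g h : nat -> R.

Lemma sum_widen_zero (F : nat -> R) m N : (m <= N)%N ->
  (forall k, (m <= k)%N -> (k < N)%N -> F k = 0) ->
  \sum_(k < m) F k = \sum_(k < N) F k.
Proof.
move=> mN H; rewrite -!(big_mkord xpredT) (@big_cat_nat _ _ _ m 0 N xpredT F (leq0n m) mN) /=.
rewrite [X in _ = _ + X]big1_seq ?addr0 // => k /andP[_]; rewrite mem_index_iota.
by case/andP=> ??; apply: H.
Qed.

Lemma spow_small h k n : h 0%N = 0 -> (n < k)%N -> spow h k n = 0.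
Proof.
move=> h0; elim: k n => [//|k IH] n nk /=.
rewrite /smul big1 // => [[i /= Hi]] _.
case: i Hi => [|i] Hi; first by rewrite h0 mul0r.
by rewrite IH ?mulr0 //; rewrite ltnS in nk; lia.
Qed.

Lemma sinv1m_rec h n : h 0%N = 0 ->
  sinv1m h n = (n == 0%N)%:R + smul h (sinv1m h) n.
Proof.
move=> h0; rewrite /sinv1m big_ord_recl /=; congr (_ + _).
rewrite /smul.
transitivity (\sum_(k < n) \sum_(i < n.+1) h i * spow h k (n - i)%N).
  by apply: eq_bigr => i _ /=; rewrite add0n.
rewrite exchange_big /=; apply: eq_bigr => -[i Hi] _ /=.
rewrite -mulr_sumr; case: i Hi => [|i] Hi; first by rewrite h0 !mul0r.
congr (_ * _); symmetry; apply: (@sum_widen_zero (fun k => spow h k _)); first by lia.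
by move=> k k1 k2; apply: spow_small => //; lia.
Qed.

(* associativity via polynomials *)
Definition Pt N f : {poly R} := \poly_(i < N) f i.

Lemma smul_poly N f g m : (m < N)%N -> smul f g m = (Pt N f * Pt N g)`_m.
Proof.
move=> mN; rewrite coefM /smul; apply: eq_bigr => -[i Hi] _ /=.
rewrite !coef_poly; have -> : (i < N)%N by lia.
by have -> : (m - i < N)%N by lia.
Qed.

Lemma coefM_agree (A A' B : {poly R}) m :
  (forall i, (i <= m)%N -> A`_i = A'`_i) -> (A * B)`_m = (A' * B)`_m.
Proof.
move=> H; rewrite !coefM; apply: eq_bigr => -[i Hi] _ /=; rewrite H //.
Qed.

Lemma coefM_agree_r (A B B' : {poly R}) m :
  (forall i, (i <= m)%N -> B`_i = B'`_i) -> (A * B)`_m = (A * B')`_m.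
Proof.
move=> H; rewrite !coefM; apply: eq_bigr => -[i Hi] _ /=; rewrite H //; lia.
Qed.

Lemma smulA f g h n : smul (smul f g) h n = smul f (smul g h) n.
Proof.
rewrite (smul_poly _ _ (ltnSn n)) [RHS](smul_poly _ _ (ltnSn n)).
rewrite (@coefM_agree (Pt n.+1 (smul f g)) (Pt n.+1 f * Pt n.+1 g)); last first.
  by move=> i im; rewrite coef_poly ltnS im (@smul_poly n.+1).
rewrite [RHS](@coefM_agree_r _ _ (Pt n.+1 g * Pt n.+1 h)); last first.
  by move=> i im; rewrite coef_poly ltnS im (@smul_poly n.+1).
by rewrite mulrA.
Qed.

Definition shift f : nat -> R := fun n => if n is n'.+1 then f n' else 0.

Lemma smul_shiftl f g n : smul (shift f) g n = shift (smul f g) n.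
Proof.
rewrite /smul; case: n => [|n]; first by rewrite big_ord_recl big_ord0 /= mul0r addr0.
by rewrite big_ord_recl /= mul0r add0r; apply: eq_bigr => i _.
Qed.

Lemma smul_shiftr f g n : smul f (shift g) n = shift (smul f g) n.
Proof.
rewrite /smul; case: n => [|n]; first by rewrite big_ord_recl big_ord0 /= mulr0 addr0.
rewrite big_ord_recr /= subnn mulr0 addr0; apply: eq_bigr => -[i Hi] _ /=.
by rewrite subSn.
Qed.

End Gen.
Section Main.
Variable R : fieldType.
Variables (s be : R) (b : nat -> R).
Hypothesis hb0 : b 0%N = 1.
Hypothesis hb1 : b 1%N = s * b 0%N.
Hypothesis hbrec : forall m, b m.+2 = s * b m.+1 + be * smul b b m.

Fixpoint c (k : nat) : nat -> R :=
  if k is k'.+1 then shift (smul (c k') b) else b.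

Lemma b_rec n : b n.+1 = s * b n + be * c 1 n.
Proof. by case: n => [|n] /=; rewrite ?hb1 ?mulr0 ?addr0 // hbrec. Qed.

Lemma key f m : smul f (c 1) m = smul (shift (smul f b)) b m.
Proof.
by rewrite /= smul_shiftr smul_shiftl; case: m => //= m; rewrite smulA.
Qed.

Lemma smul_b_succ f m :
  smul f b m.+1 = f m.+1 + (s * smul f b m + be * smul f (c 1) m).
Proof.
rewrite {1}/smul big_ord_recr /= subnn hb0 mulr1 addrC; congr (_ + _).
rewrite /smul !mulr_sumr -big_split /=; apply: eq_bigr => -[i Hi] _ /=.
by rewrite subSn // b_rec mulrDr !mulrA [f i * s]mulrC [f i * be]mulrC.
Qed.

Lemma stieltjes k n :
  c k n.+1 = (if k is k'.+1 then c k' n else 0) + s * c k n + be * c k.+1 n.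
Proof.
case: k => [|k]; first by rewrite add0r; exact: b_rec.
case: n => [|m].
  by rewrite /= /smul big_ord_recl big_ord0 hb0 !mulr0 !addr0 mulr1.
have -> : c k.+2 m.+1 = smul (c k) (c 1) m by rewrite key.
by rewrite [c k.+1 m.+2]/= smul_b_succ addrA.
Qed.

Lemma c_low k n : (n < k)%N -> c k n = 0.
Proof.
elim: k n => [//|k IH] [|n] //= Hn.
rewrite /smul big1 // => -[i Hi] _ /=; rewrite IH ?mul0r //; lia.
Qed.

Lemma c_diag k : c k k = 1.
Proof.
elim: k => [|k IH] //=.
rewrite /smul big_ord_recr /= subnn hb0 mulr1 IH big1 ?add0r // => -[i Hi] _ /=.
by rewrite c_low ?mul0r.
Qed.

Definition st (f : nat -> R) k :=
  (if k is k'.+1 then f k' else 0) + s * f k + be * f k.+1.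

Lemma sym f g m : f m.+1 = 0 -> g m.+1 = 0 ->
  \sum_(k < m.+1) st f k * g k * be ^+ k = \sum_(k < m.+1) f k * st g k * be ^+ k.
Proof.
move=> fm gm.
have E1 : \sum_(k < m.+1) (if (k : nat) is kk.+1 then f kk else 0) * g k * be ^+ k
        = \sum_(k < m) f k * (be * g k.+1) * be ^+ k.
  rewrite big_ord_recl /= mul0r mul0r add0r; apply: eq_bigr => i _.
  rewrite exprS; ring.
have E2 : \sum_(k < m.+1) f k * (if (k : nat) is kk.+1 then g kk else 0) * be ^+ k
        = \sum_(k < m) (be * f k.+1) * g k * be ^+ k.
  rewrite big_ord_recl /= mulr0 mul0r add0r; apply: eq_bigr => i _.
  rewrite exprS; ring.
have E3 : \sum_(k < m.+1) (be * f k.+1) * g k * be ^+ k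
        = \sum_(k < m) (be * f k.+1) * g k * be ^+ k.
  by rewrite big_ord_recr /= fm mulr0 mul0r mul0r addr0.
have E4 : \sum_(k < m.+1) f k * (be * g k.+1) * be ^+ k
        = \sum_(k < m) f k * (be * g k.+1) * be ^+ k.
  by rewrite big_ord_recr /= gm mulr0 mulr0 mul0r addr0.
rewrite /st.
under eq_bigr do rewrite !mulrDl.
under [RHS]eq_bigr do rewrite !mulrDr !mulrDl.
rewrite !big_split /= E1 E2 E3 E4.
have E5 : \sum_(k < m.+1) s * f k * g k * be ^+ k = \sum_(k < m.+1) f k * (s * g k) * be ^+ k.
  by apply: eq_bigr => i _; ring.
rewrite E5; ring.
Qed.

Definition M m i j := \sum_(k < m.+1) c k i * c k j * be ^+ k.

Lemma M_step m i j : (i <= m)%N -> (j <= m)%N -> M m i.+1 j = M m i j.+1.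
Proof.
move=> im jm; rewrite /M.
under eq_bigr do rewrite stieltjes.
under [RHS]eq_bigr do rewrite stieltjes.
have := @sym (fun k => c k i) (fun k => c k j) m.
by apply; apply: c_low; rewrite ltnS.
Qed.

Lemma M_val m i j : (i + j <= m)%N -> M m i j = b (i + j).
Proof.
elim: i j => [|i IH] j Hij.
  rewrite /M big_ord_recl /= hb0 mul1r expr0 mulr1 big1 ?addr0 // => k _.
  by rewrite /= mul0r mul0r.
rewrite M_step; [|lia|lia]. rewrite IH; last by lia.
by rewrite addnS.
Qed.


Lemma prod_exp n : \prod_(i < n.+1) be ^+ i = be ^+ 'C(n.+1, 2).
Proof.
elim: n => [|n IH]; first by rewrite big_ord1.
rewrite big_ord_recr /= IH -exprD; congr (_ ^+ _); rewrite !binS ?bin1 ?bin0; lia.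
Qed.

Lemma hankel_val n : hankel b n = be ^+ 'C(n.+1, 2).
Proof.
pose A := \matrix_(i < n.+1, k < n.+1) c k i.
pose d := \row_(k < n.+1) be ^+ k.
have E : \matrix_(i < n.+1, j < n.+1) b (i + j) = A *m diag_mx d *m A^T.
  apply/matrixP => i j; rewrite !mxE mul_mx_diag.
  rewrite -(@M_val (n + n)); last by have := ltn_ord i; have := ltn_ord j; lia.
  rewrite /M -(@sum_widen_zero _ (fun k => c k i * c k j * be ^+ k) n.+1); first last.
  - by move=> k k1 k2; rewrite (@c_low k i) ?mul0r //; have := ltn_ord i; lia.
  - lia.
  by apply: eq_bigr => k _; rewrite !mxE mulrAC.
rewrite /hankel E !det_mulmx det_tr det_diag det_trig; last first.
  by apply/is_trig_mxP => i j ij; rewrite mxE c_low.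
rewrite big1 ?mul1r ?mulr1 => [|i _]; last by rewrite mxE c_diag.
rewrite -prod_exp; apply: eq_bigr => i _; by rewrite mxE.
Qed.

Definition hb j := s * (j == 1)%:R + (if (2 <= j)%N then be * b (j - 2) else 0).

Lemma b_fix n : b n = (n == 0)%:R + smul hb b n.
Proof.
case: n => [|n].
  by rewrite /smul big_ord1 /hb /= hb0 !mulr0 !addr0 mul0r addr0.
rewrite /smul big_ord_recl /hb /= mulr0 addr0 mul0r !add0r.
case: n => [|n].
  by rewrite big_ord1 /= hb1 mulr1 addr0.
rewrite big_ord_recl /= mulr1 addr0 hbrec; congr (_ + _).
rewrite /smul mulr_sumr; apply: eq_bigr => i _ /=.
by rewrite /bump /= !add1n ?subSS ?subn0 mulr0 add0r mulrA.
Qed.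

Lemma J_val k i n : (n < k)%N -> Jtrunc (fun _ => s) (fun _ => be) k i n = b n.
Proof.
elim: k i n => [//|k IH] i n.
have -> : Jtrunc (fun _ => s) (fun _ => be) k.+1 i =
  sinv1m (fun n => s * (n == 1%N)%:R + (if (2 <= n)%N then be *
      Jtrunc (fun _ => s) (fun _ => be) k i.+1 (n - 2)%N else 0)) by [].
set g := sinv1m _.
move: n; elim/ltn_ind => n IHn Hn.
rewrite /g sinv1m_rec; last by rewrite /= mulr0 addr0.
rewrite -/g b_fix; congr (_ + _); apply: eq_bigr => -[j Hj] _ /=.
case: j Hj => [|j] Hj; first by rewrite /hb /= !mulr0 !addr0 !mul0r.
rewrite IHn; [|lia|lia]; congr (_ * _); rewrite /hb.
case: ifP => // j2; rewrite IH //; lia.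
Qed.

End Main.

Unset Implicit Arguments.
Theorem mainTheorem5 (R : fieldType) (p s t : R) (a : nat -> R) :
  p != 0 ->
  a 0%N = 1 ->
  a 1%N = p ->
  (forall n : nat, (2 <= n)%N ->
     a n = s * a n.-1 + t * \sum_(0 <= k < n - 2) a k.+1 * a (n - k - 2)%N) ->
  (forall n : nat, p^-1 * a n.+1 = Jfrac (fun _ => s) (fun _ => p * t) n) /\
  (forall n : nat, hankel (fun m => p^-1 * a m.+1) n = (p * t) ^+ 'C(n.+1, 2)).
Proof.
move=> pn0 a0 a1 H.
pose b := fun m => p^-1 * a m.+1.
have hb0 : b 0%N = 1 by rewrite /b a1 mulVf.
have hb1 : b 1%N = s * b 0%N.
  by rewrite /b (H 2%N) // /= big_geq // mulr0 addr0 mulrCA.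
have hbrec : forall m, b m.+2 = s * b m.+1 + (p * t) * smul b b m.
  move=> m; rewrite /b (H m.+3) // big_mkord /smul.
  rewrite mulrDr mulrCA; congr (_ + _).
  have -> : (m.+3 - 2)%N = m.+1 by lia.
  rewrite !mulr_sumr; apply: eq_bigr => -[k Hk] _ /=.
  have -> : (m.+3 - k - 2)%N = (m - k).+1 by lia.
  by field.
split.
- by move=> n; rewrite /Jfrac (J_val hb0 hb1 hbrec).
- exact: (hankel_val hb0 hb1 hbrec).
Qed.
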